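(* Let $\mathbf{U},\mathbf{V}$ be $D\times D$ unimodular matrices and $\bm{\Lambda}_1,\dots,\bm{\Lambda}_L$ nonsingular diagonal integer matrices, and let $\mathbf{M}_i=\mathbf{U}\bm{\Lambda}_i\mathbf{V}$. Let $\bm{\Lambda}=\mathrm{diag}(\Lambda(1,1),\dots,\Lambda(D,D))$ where $\Lambda(j,j)$ is the (positive) lcm of the integers $\Lambda_1(j,j),\dots,\Lambda_L(j,j)$. Then for every unimodular $\mathbf{B}$, $\mathbf{R}=\mathbf{U}\bm{\Lambda}\mathbf{B}$ is an lcrm of $\mathbf{M}_1,\dots,\mathbf{M}_L$, and every $\mathbf{m}\in\mathcal{N}(\mathbf{R})$ is uniquely determined by its remainders $\mathbf{r}_i=\langle\mathbf{m}\rangle_{\mathbf{M}_i}$. Furthermore, when $\mathbf{B}=\mathbf{I}$, setting $\mathbf{a}=\mathbf{U}^{-1}\mathbf{m}$ and $\bm{\zeta}_i=\langle\mathbf{U}^{-1}\mathbf{r}_i\rangle_{\bm{\Lambda}_i}$, each component $a(j)$ satisfies $0\le a(j)<\Lambda(j,j)$ and is the unique integer in this range with $a(j)\equiv\zeta_i(j)\pmod{|\Lambda_i(j,j)|}$ for all $1\le i\le L$.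
   Context: Unimodular means integer with determinant $\pm1$. An lcrm of integer matrices $\mathbf{M}_1,\dots,\mathbf{M}_L$ is a nonsingular integer $\mathbf{R}=\mathbf{M}_i\mathbf{P}_i$ (integer $\mathbf{P}_i$, all $i$) such that every such common right multiple equals $\mathbf{R}\mathbf{A}$ for integer $\mathbf{A}$. $\mathcal{N}(\mathbf{M})=\{\mathbf{k}\in\mathbb{Z}^D:\mathbf{k}=\mathbf{M}\mathbf{x},\ \mathbf{x}\in[0,1)^D\}$; $\langle\mathbf{m}\rangle_{\mathbf{M}}$ is the unique $\mathbf{r}\in\mathcal{N}(\mathbf{M})$ with $\mathbf{m}-\mathbf{r}\in\mathbf{M}\mathbb{Z}^D$. $a(j)$, $\zeta_i(j)$ denote $j$-th components, $\Lambda_i(j,j)$ the $j$-th diagonal entry. *)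

(* Defs.v *)
From HB Require Import structures.
From mathcomp Require Import all_boot all_order all_algebra.
From Stdlib Require Import ClassicalEpsilon.
Set Implicit Arguments. Unset Strict Implicit. Unset Printing Implicit Defensive.
Import Order.TTheory GRing.Theory Num.Theory.
Local Open Scope ring_scope.

Definition unimodular (D : nat) (A : 'M[int]_D) : Prop :=
  \det A = 1 \/ \det A = -1.

Definition lcrm (D L : nat) (M : 'I_L -> 'M[int]_D) (R : 'M[int]_D) : Prop :=
  [/\ \det R != 0,
      (forall i, exists P : 'M[int]_D, R = M i *m P) &
      (forall S : 'M[int]_D, (forall i, exists P : 'M[int]_D, S = M i *m P) ->
         exists A : 'M[int]_D, S = R *m A)].

(* N(M) = { k in Z^D : k = M x, x in [0,1)^D }.  For nonsingular integer M,
   such an x is necessarily rational, so x ranges over rat vectors. *)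
Definition inN (D : nat) (M : 'M[int]_D) (k : 'cV[int]_D) : Prop :=
  exists x : 'cV[rat]_D,
    (forall j, 0 <= x j 0 < 1) /\
    map_mx (fun z : int => z%:~R) k = map_mx (fun z : int => z%:~R) M *m x.

Definition is_rem (D : nat) (M : 'M[int]_D) (m r : 'cV[int]_D) : Prop :=
  inN M r /\ exists y : 'cV[int]_D, m - r = M *m y.

Definition remv (D : nat) (M : 'M[int]_D) (m : 'cV[int]_D) : 'cV[int]_D :=
  epsilon (inhabits 0) (is_rem M m).

(* Main.v *)
Require Import Defs.
From HB Require Import structures.
From mathcomp Require Import all_boot all_order all_algebra.
From mathcomp Require Import zify.
From Stdlib Require Import ClassicalEpsilon.
Import Order.TTheory GRing.Theory Num.Theory.
Local Open Scope ring_scope.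
Set Implicit Arguments. Unset Strict Implicit.

Lemma mapQB (m n:nat) (A B : 'M[int]_(m,n)) : map_mx (fun z : int => z%:~R : rat) (A - B) = map_mx (fun z : int => z%:~R : rat) A - map_mx (fun z : int => z%:~R : rat) B.
Proof. by apply/matrixP => i j; rewrite !mxE rmorphB. Qed.
Lemma mapQM (m n p:nat) (A : 'M[int]_(m,n)) (B : 'M[int]_(n,p)) : map_mx (fun z : int => z%:~R : rat) (A *m B) = map_mx (fun z : int => z%:~R : rat) A *m map_mx (fun z : int => z%:~R : rat) B.
Proof. apply/matrixP => i j; rewrite !mxE rmorph_sum; apply: eq_bigr => k _. by rewrite !mxE rmorphM. Qed.
Lemma mapQ1 (n:nat) : map_mx (fun z : int => z%:~R : rat) (1%:M : 'M[int]_n) = 1%:M.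
Proof. by apply/matrixP => i j; rewrite !mxE rmorphMn. Qed.

Lemma unimod_unit (D : nat) (A : 'M[int]_D) : unimodular A -> A \in unitmx.
Proof. by rewrite unitmxE; case=> ->; rewrite ?unitr1 ?unitrN1. Qed.

Lemma unimod_det (D : nat) (A : 'M[int]_D) : unimodular A -> \det A != 0.
Proof. by case=> ->; rewrite ?oppr_eq0 oner_eq0. Qed.

Lemma mapQ_unit (D : nat) (M : 'M[int]_D) : \det M != 0 ->
  map_mx (fun z : int => z%:~R : rat) M \in unitmx.
Proof.
move=> h; rewrite unitmxE (det_map_mx (intmul (1:rat))) unitfE /=.
by rewrite intr_eq0.
Qed.

Lemma rem_exists (D : nat) (M : 'M[int]_D) (m : 'cV[int]_D) :
  \det M != 0 -> exists r, is_rem M m r.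
Proof.
move=> hM.
set Mq := map_mx (fun z : int => z%:~R : rat) M.
set x := invmx Mq *m map_mx (fun z : int => z%:~R : rat) m.
pose y : 'cV[int]_D := \col_j Num.floor (x j 0).
exists (m - M *m y); split; last first.
  by exists y; rewrite opprB addrC subrK.
exists (x - map_mx (fun z : int => z%:~R : rat) y); split.
  move=> j; have := floor_itv (x j 0) => /andP[h1 h2].
  have -> : (x - map_mx (fun z : int => z%:~R : rat) y) j 0 =
     x j 0 - (Num.floor (x j 0))%:~R by rewrite !mxE.
  by rewrite subr_ge0 h1 /= ltrBlDl; move: h2; rewrite intrD.
rewrite mapQB mapQM mulmxBr.
by rewrite /x mulmxA mulmxV ?mapQ_unit // mul1mx.
Qed.

Lemma remvP (D : nat) (M : 'M[int]_D) (m : 'cV[int]_D) :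
  \det M != 0 -> is_rem M m (remv M m).
Proof. by move=> hM; apply: epsilon_spec; apply: rem_exists. Qed.

Lemma lcm_gt0 (D L : nat) (lam : 'I_L -> 'rV[int]_D) (j : 'I_D) :
  (forall i, lam i ord0 j != 0) ->
  (0 < \big[lcmn/1%N]_(i < L) `|lam i ord0 j|)%N.
Proof.
move=> h; apply: (big_ind (fun d => 0 < d)%N) => //.
  by move=> a b ha hb; rewrite lcmn_gt0 ha hb.
by move=> i _; rewrite absz_gt0.
Qed.

Lemma lcm_dvd (D L : nat) (U V : 'M[int]_D) (lam : 'I_L -> 'rV[int]_D)
  (n : nat) (S : 'M[int]_(D, n)) :
  U \in unitmx ->
  (forall i, exists P : 'M[int]_(D, n), S = U *m diag_mx (lam i) *m V *m P) ->
  exists C : 'M[int]_(D, n), S =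
    U *m diag_mx (\row_j ((\big[lcmn/1%N]_(i < L) `|lam i ord0 j|%N)%:Z)) *m C.
Proof.
move=> hU hS.
pose W := invmx U *m S.
have hW : forall j k, (\big[lcmn/1%N]_(i < L) `|lam i ord0 j| %| `|W j k|)%N.
  move=> j k; apply/dvdn_biglcmP => i _.
  rewrite /W; have [P ->] := hS i.
  rewrite !mulmxA mulVmx // mul1mx -mulmxA mul_diag_mx mxE.
  by rewrite abszM dvdn_mulr.
pose C := \matrix_(j, k) (W j k %/ ((\big[lcmn/1%N]_(i < L) `|lam i ord0 j|%N)%:Z))%Z.
exists C.
have e : diag_mx (\row_j ((\big[lcmn/1%N]_(i < L) `|lam i ord0 j|%N)%:Z)) *m C = W.
  rewrite mul_diag_mx; apply/matrixP => j k; rewrite mxE mxE /C mxE mulrC divzK //.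
  by rewrite dvdzE absz_nat hW.
by rewrite -mulmxA e /W mulmxA mulmxV // mul1mx.
Qed.

Lemma inN_unique (D : nat) (R : 'M[int]_D) (m m' c : 'cV[int]_D) :
  \det R != 0 -> inN R m -> inN R m' -> m - m' = R *m c -> m = m'.
Proof.
move=> hR [x [hx ex]] [x' [hx' ex']] e.
have ec : map_mx (fun z : int => z%:~R : rat) c = x - x'.
  have : map_mx (fun z : int => z%:~R : rat) R *m map_mx (fun z : int => z%:~R : rat) c
       = map_mx (fun z : int => z%:~R : rat) R *m (x - x').
    by rewrite -mapQM -e mapQB ex ex' mulmxBr.
  move/(congr1 (mulmx (invmx (map_mx (fun z : int => z%:~R : rat) R)))).
  by rewrite !mulmxA mulVmx ?mapQ_unit // !mul1mx.
have c0 : c = 0.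
  apply/matrixP => j k; rewrite (ord1 k) mxE.
  have := congr1 (fun A : 'cV[rat]_D => A j 0) ec; rewrite !mxE => ecj.
  have /andP[h1 h2] := hx j; have /andP[h3 h4] := hx' j.
  have l1 : c j 0 < 1.
    by rewrite -(ltrz1 rat) ecj; apply: le_lt_trans h2; rewrite lerBlDr lerDl.
  have l2 : - c j 0 < 1.
    rewrite -(ltrz1 rat) intrN ecj opprB.
    by apply: le_lt_trans h4; rewrite lerBlDr lerDl.
  lia.
by apply/eqP; rewrite -subr_eq0 e c0 mulmx0.
Qed.


Lemma mapQdiag (n : nat) (d : 'rV[int]_n) :
  map_mx (fun z : int => z%:~R : rat) (diag_mx d) =
  diag_mx (map_mx (fun z : int => z%:~R : rat) d).
Proof. by apply/matrixP => i j; rewrite !mxE rmorphMn. Qed.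

Lemma diag_det (n : nat) (d : 'rV[int]_n) : (forall j, d 0 j != 0) -> \det (diag_mx d) != 0.
Proof. by move=> h; rewrite det_diag; apply/prodf_neq0 => j _; apply: h. Qed.

Theorem corollary4 (D L : nat) (U V : 'M[int]_D) (lam : 'I_L -> 'rV[int]_D)
  (hU : unimodular U) (hV : unimodular V)
  (hlam : forall (i : 'I_L) (j : 'I_D), lam i ord0 j != 0) :
  let M := fun i : 'I_L => U *m diag_mx (lam i) *m V in
  let Lam : 'M[int]_D :=
    diag_mx (\row_j ((\big[lcmn/1%N]_(i < L) `|lam i ord0 j|%N)%:Z)) in
  (forall B : 'M[int]_D, unimodular B ->
     lcrm M (U *m Lam *m B) /\
     (forall m m' : 'cV[int]_D, inN (U *m Lam *m B) m -> inN (U *m Lam *m B) m' ->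
        (forall i, remv (M i) m = remv (M i) m') -> m = m')) /\
  (forall m : 'cV[int]_D, inN (U *m Lam) m ->
     let a := invmx U *m m in
     let zeta := fun i : 'I_L => remv (diag_mx (lam i)) (invmx U *m remv (M i) m) in
     forall j : 'I_D,
       [/\ 0 <= a j ord0, a j ord0 < Lam j j,
           (forall i, (a j ord0 = zeta i j ord0 %[mod `|lam i ord0 j|])%Z) &
           (forall t : int, 0 <= t -> t < Lam j j ->
              (forall i, (t = zeta i j ord0 %[mod `|lam i ord0 j|])%Z) -> t = a j ord0)]).
Proof.
move=> M Lam.
have hUu := unimod_unit hU; have hVu := unimod_unit hV.
have hdiag : forall i, \det (diag_mx (lam i)) != 0.
  by move=> i; apply: diag_det => j; rewrite -[0]/(@ord0 0); apply: hlam.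
have hMdet : forall i, \det (M i) != 0.
  move=> i; rewrite /M !det_mulmx; do 2?apply: mulf_neq0 => //; exact: unimod_det.
have hpos j := lcm_gt0 (fun i => hlam i j).
have hLdet : \det Lam != 0.
  by apply: diag_det => j; rewrite mxE eqz_nat -lt0n hpos.
have hLjj : forall j, Lam j j = (\big[lcmn/1%N]_(i < L) `|lam i ord0 j|%N)%:Z.
  by move=> j; rewrite /Lam mxE eqxx mulr1n mxE.
split.
  move=> B hB; have hBu := unimod_unit hB.
  have key : forall n (S : 'M[int]_(D, n)), (forall i, exists P, S = M i *m P) ->
      exists A, S = U *m Lam *m B *m A.
    move=> n S hS; have [C eC] := lcm_dvd hUu hS.
    by exists (invmx B *m C); rewrite eC -!mulmxA mulKVmx.
  split.
    split.
    - by rewrite !det_mulmx; do 2?apply: mulf_neq0 => //; exact: unimod_det.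
    - move=> i.
      exists (invmx V *m diag_mx (\row_j ((\big[lcmn/1%N]_(i < L) `|lam i ord0 j|%N)%:Z
                  %/ lam i ord0 j)%Z) *m B).
      rewrite /M -!mulmxA mulKVmx //; congr (_ *m _).
      rewrite mulmxA mulmx_diag /Lam; congr (diag_mx _ *m _).
      apply/rowP => j; rewrite !mxE mulrC divzK //.
      rewrite dvdzE absz_nat; apply: (biglcmn_sup i) => //.
    - move=> S hS; exact: key.
  move=> m m' hm hm' hr.
  have [c ec] : exists c, m - m' = U *m Lam *m B *m c.
    apply: key => i.
    have [_ [y ey]] := remvP m (hMdet i).
    have [_ [y' ey']] := remvP m' (hMdet i).
    exists (y - y'); rewrite mulmxBr -ey -ey' hr.
    by rewrite opprB addrA subrK.
  apply: (inN_unique _ hm hm' ec).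
  by rewrite !det_mulmx; do 2?apply: mulf_neq0 => //; exact: unimod_det.
move=> m [x [hx ex]] a zeta j.
have ea : map_mx (fun z : int => z%:~R : rat) a =
          map_mx (fun z : int => z%:~R : rat) Lam *m x.
  by rewrite /a mapQM ex !mulmxA -mapQM mulKmx.
have eaj : (a j 0)%:~R = ((\big[lcmn/1%N]_(i < L) `|lam i ord0 j|%N)%:Z)%:~R * x j 0 :> rat.
  have := congr1 (fun A : 'cV[rat]_D => A j 0) ea.
  by rewrite /Lam mapQdiag mul_diag_mx !mxE.
have /andP[hx1 hx2] := hx j.
have ha0 : 0 <= a j 0.
  by rewrite -(ler0z rat) eaj mulr_ge0 // ler0z.
have haL : a j 0 < Lam j j.
  rewrite hLjj -(ltr_int rat) eaj gtr_pMr //.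
  by rewrite ltr0z; apply: hpos.
have hcong : forall i, (a j ord0 = zeta i j ord0 %[mod `|lam i ord0 j|])%Z.
  move=> i.
  have [_ [y ey]] := remvP m (hMdet i).
  have [_ [y2 ey2]] := remvP (invmx U *m remv (M i) m) (hdiag i).
  have e1 : diag_mx (lam i) *m (V *m y) = invmx U *m m - invmx U *m remv (M i) m.
    by rewrite -mulmxBr ey /M -!mulmxA mulKmx.
  have e2 : a - zeta i = diag_mx (lam i) *m (V *m y + y2).
    by rewrite mulmxDr e1 -ey2 addrA subrK.
  have := congr1 (fun A : 'cV[int]_D => A j 0) e2; rewrite mul_diag_mx !mxE => e3.
  apply/eqP; rewrite eqz_mod_dvd dvdzE e3 abszM; apply: dvdn_mulr.
  by rewrite -abszE absz_nat.
split=> // t ht0 htL htc.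
have hd : (\big[lcmn/1%N]_(i < L) `|lam i ord0 j|%N %| `|t - a j ord0|)%N.
  apply/dvdn_biglcmP => i _.
  have := htc i; rewrite -(hcong i) => /eqP; rewrite eqz_mod_dvd dvdzE.
  by rewrite -abszE absz_nat.
move: htL haL; rewrite hLjj => htL haL.
have hlt : (`|t - a j ord0| < \big[lcmn/1%N]_(i < L) `|lam i ord0 j|%N)%N.
  move: htL haL ha0 ht0; set N := \big[lcmn/1%N]_(i < L) _; set b := a j ord0.
  move=> htL haL ha0 ht0; lia.
apply/eqP; rewrite -subr_eq0 -absz_eq0; apply/negPn/negP => hne.
have hp : (0 < `|t - a j ord0|)%N by rewrite lt0n.
by have := gtnNdvd hp hlt; rewrite hd.
Qed.
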